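(* Let $X,Y$ be $\mathbb{Q}$-vector spaces and let $f:X\to Y$. Suppose $X$ carries a topology $\tau_X$ such that every neighborhood of the origin is naturally absorbent. Let $B$ be a neighborhood of the origin and $s\ge1$. If $\Delta_{h_1h_2\cdots h_s}f(x)=0$ for all $x\in X$ and all $h_1,\dots,h_s\in B$, then $\Delta_{h_1h_2\cdots h_s}f(x)=0$ for all $(x,h_1,\dots,h_s)\in X^{s+1}$.
   Context: A set $B\subseteq X$ is called naturally absorbent if for each $x\in X$ there exists $k\in\mathbb{N}$ with $x\in kB=\{kz:z\in B\}$. For $h\in X$, $\Delta_hf(x)=f(x+h)-f(x)$ and $\Delta_{h_1h_2\cdots h_s}f(x)=\Delta_{h_1}\left(\Delta_{h_2\cdots h_s}f\right)(x)$ for $s\ge 2$. *)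

(* Defs.v *)
From HB Require Import structures.
From mathcomp Require Import all_boot all_order all_algebra.
Set Implicit Arguments. Unset Strict Implicit. Unset Printing Implicit Defensive.
Import Order.TTheory GRing.Theory Num.Theory.
Local Open Scope ring_scope.

Definition is_topology (X : Type) (open : (X -> Prop) -> Prop) : Prop :=
  [/\ open (fun _ => False),
      open (fun _ => True),
      (forall U V, open U -> open V -> open (fun x => U x /\ V x))
    & (forall (I : Type) (F : I -> X -> Prop),
         (forall i, open (F i)) -> open (fun x => exists i, F i x))].

Definition nbhd (X : Type) (open : (X -> Prop) -> Prop) (x : X) (N : X -> Prop) :=
  exists U, [/\ open U, U x & forall y, U y -> N y].

Definition naturally_absorbent (X : lmodType rat) (B : X -> Prop) : Prop :=
  forall x : X, exists k : nat, (0 < k)%N /\ exists z, B z /\ x = k%:R *: z.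

Definition delta (X Y : zmodType) (h : X) (f : X -> Y) : X -> Y :=
  fun x => f (x + h) - f x.

Fixpoint deltas (X Y : zmodType) (hs : seq X) (f : X -> Y) : X -> Y :=
  match hs with
  | [::] => f
  | h :: hs' => delta h (deltas hs' f)
  end.

(* Main.v *)
Require Import Defs.
From HB Require Import structures.
From mathcomp Require Import all_boot all_order all_algebra.
Import GRing.Theory.
Local Open Scope ring_scope.

Lemma aux (Y : zmodType) (a b c : Y) : -a - (b - c) = -b - (a - c).
Proof. by rewrite !opprB !addrA [- a + c]addrC [- b + c]addrC -!addrA (addrC (- b)). Qed.

Lemma deltas_delta (X Y : zmodType) (h : X) (g : X -> Y) (hs : seq X) :
  forall x, deltas hs (delta h g) x = delta h (deltas hs g) x.
Proof.
elim: hs => [|t ts IH] x //=.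
rewrite /delta /= in IH *; rewrite !IH.
rewrite -!addrA (addrC h t); congr (_ + _).
exact: aux.
Qed.

Lemma delta_mult (X Y : zmodType) (z : X) (G : X -> Y) :
  (forall y, delta z G y = 0) -> forall k y, delta (z *+ k) G y = 0.
Proof.
move=> Hz; elim=> [|k IH] y; rewrite /delta.
  by rewrite mulr0n addr0 subrr.
have := IH y; have := Hz (y + z *+ k); rewrite /delta => /eqP; rewrite subr_eq0 => /eqP E1.
by rewrite mulrSr addrA E1.
Qed.

Lemma mainL (X Y : lmodType rat) (B : X -> Prop)
  (HB : forall x : X, exists k : nat, (0 < k)%N /\ exists z, B z /\ x = k%:R *: z)
  (hs : seq X) : forall (g : X -> Y),
  (forall x ts, size ts = size hs -> (forall h, h \in ts -> B h) -> deltas ts g x = 0) ->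
  forall x, deltas hs g x = 0.
Proof.
elim: hs => [|h hs IH] g H x.
  by apply: (H x [::]).
rewrite /= -deltas_delta; apply: IH => y ts Hsz Hts.
rewrite deltas_delta.
have [k [_ [z [Bz ->]]]] := HB h.
rewrite scaler_nat; apply: delta_mult => w.
apply: (H w (z :: ts)); first by rewrite /= Hsz.
by move=> u; rewrite inE => /orP [/eqP -> //|]; apply: Hts.
Qed.

Theorem theorem4 (X Y : lmodType rat) (f : X -> Y)
  (open : (X -> Prop) -> Prop) (Htop : is_topology open)
  (Habs : forall N, nbhd open 0 N -> naturally_absorbent N)
  (B : X -> Prop) (HB : nbhd open 0 B) (s : nat) (Hs : (1 <= s)%N)
  (Hvan : forall (x : X) (hs : seq X),
      size hs = s -> (forall h, h \in hs -> B h) -> deltas hs f x = 0) :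
  forall (x : X) (hs : seq X), size hs = s -> deltas hs f x = 0.
Proof.
move=> x hs Hsz.
apply: (@mainL X Y B (Habs B HB) hs f) => y ts Hts Hin.
by apply: Hvan => //; rewrite Hts.
Qed.
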